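(* Let $G$ be a finite simple graph that contains a cycle of odd length. Then $S(G)$ contains a subdivision of $K_{3,3}$ as a subgraph.
   Context: For a graph $G$, the great shadow $S(G)$ is the graph obtained from $G$ by adding, for each vertex $v$ of $G$, a new vertex $v'$ (the shadow vertex of $v$) and making $v'$ adjacent to $v$ and to every neighbor of $v$ in $G$; no other edges are added. A subdivision of a graph $F$ is a graph obtained from $F$ by replacing edges with internally vertex-disjoint paths. *)

(* Defs.v *)
From mathcomp Require Import all_boot.
Set Implicit Arguments. Unset Strict Implicit. Unset Printing Implicit Defensive.

Definition simple_graph (T : finType) (e : rel T) : Prop :=
  irreflexive e /\ symmetric e.

Definition has_odd_cycle (T : finType) (e : rel T) : Prop :=
  exists c : seq T, [/\ uniq c, 3 <= size c, odd (size c) & cycle e c].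

(* The great shadow S(G): vertices inl v (original) and inr v (shadow v'),
   v' adjacent to v and to every neighbour of v; no edges among shadows. *)
Definition great_shadow (T : finType) (e : rel T) : rel (T + T) :=
  fun x y =>
    match x, y with
    | inl u, inl v => e u v
    | inl u, inr v => (u == v) || e v u
    | inr u, inl v => (u == v) || e u v
    | inr _, inr _ => false
    end.

(* H (on V) contains a subdivision of K_{3,3} as a subgraph: six distinct
   branch vertices a_0..a_2, b_0..b_2 and nine paths a_i -- P i j -- b_j
   (P i j = list of internal vertices) which are internally vertex-disjoint
   and whose internal vertices avoid the branch vertices. *)
Definition has_K33_subdivision (V : finType) (h : rel V) : Prop :=
  exists (a b : 'I_3 -> V) (P : 'I_3 -> 'I_3 -> seq V),
    [/\ injective a /\ injective b, (forall i j, a i != b j),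
        (forall i j, path h (a i) (rcons (P i j) (b j)) /\ uniq (P i j)),
        (forall i j x, x \in P i j -> (forall k, x != a k) /\ (forall k, x != b k))
      & (forall i j i' j', (i, j) != (i', j') ->
           forall x, x \in P i j -> x \notin P i' j')].

(* Main.v *)
Require Import Defs.
From mathcomp Require Import all_boot.
From mathcomp Require Import zify.

Lemma path_iota (V : Type) (h : rel V) (g : nat -> V) a k :
  (forall i, a <= i < a + k -> h (g i) (g i.+1)) ->
  path h (g a) [seq g i | i <- iota a.+1 k].
Proof.
elim: k a => [|k IH] a H //=.
rewrite H; last by lia.
apply: IH => i Hi; apply: H; lia.
Qed.

Theorem lemma5p1 (T : finType) (e : rel T) :
  simple_graph e -> has_odd_cycle e -> has_K33_subdivision (great_shadow e).
Proof.
move=> [irr sym] [c [uc s3 oc cyc]].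
have [x0 _] : {x : T | true} by case: c s3 {uc oc cyc} => [|x] //; exists x.
set n := size c in s3 oc.
pose f i := nth x0 c (i %% n).
have adj : forall i, i < n -> e (f i) (f i.+1).
  move: cyc; rewrite (cycle_path x0) => /(pathP x0) H i ilt.
  case: (ltnP i.+1 n) => [i1|ni].
  - by have := H i.+1 i1; rewrite /f !modn_small.
  - have -> : i = n.-1 by lia.
    have := H 0 ltac:(lia); rewrite /= -nth_last /f.
    rewrite (modn_small (_ : n.-1 < n)) ?prednK ?modnn; [done|lia..].
have fsym : forall a b, e (f b) (f a) -> e (f a) (f b) by move=> a b; rewrite sym.
have finj : forall i j, i < n -> j < n -> f i = f j -> i = j.
  move=> i j Hi Hj; rewrite /f !modn_small // => /eqP.
  by rewrite nth_uniq // => /eqP.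
have fn : f n = f 0 by rewrite /f modnn mod0n.
have [m nm] : exists m, n = m.*2.+1.
  by exists n./2; rewrite -{1}(odd_double_half n) oc.
have m1 : 1 <= m by lia.
pose C i : (T + T)%type := inl (f i).
pose S i : (T + T)%type := inr (f i).
pose w i := if odd i then S i else C i.
pose w' i := if odd i then C i else S i.
pose g2 i := w' (n.+2 - i).
pose intA := [seq w i | i <- iota 3 (m.*2 - 2)].
pose intB := [seq g2 i | i <- iota 3 (m.*2 - 2)].
have memA : forall x, x \in intA -> exists2 i, 3 <= i <= m.*2 & x = w i.
  move=> x /mapP [i]; rewrite mem_iota => Hi ->; exists i => //; lia.
have memB : forall x, x \in intB -> exists2 i, 3 <= i <= m.*2 & x = w' i.
  move=> x /mapP [i]; rewrite mem_iota => Hi ->; exists (n.+2 - i) => //; lia.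
have rc : forall k, rcons (iota 3 k) (3 + k) = iota 3 k.+1.
  by move=> k; rewrite -cats1 -[k.+1]addn1 iotaD.
have pathA : path (great_shadow e) (C 2) (rcons intA (S 0)).
  have -> : S 0 = w (3 + (m.*2 - 2)).
    by rewrite (_ : 3 + _ = n); [rewrite /w oc /S fn | lia].
  rewrite /intA -map_rcons rc (_ : C 2 = w 2) //.
  apply: path_iota => i Hi.
  have ai := adj i ltac:(lia); have fi := fsym _ _ ai.
  by rewrite /w /= ; case: (odd i) => /=; rewrite ?ai ?fi ?orbT.
have pathB : path (great_shadow e) (C 0) (rcons intB (S 2)).
  have -> : S 2 = g2 (3 + (m.*2 - 2)).
    by rewrite /g2 (_ : n.+2 - _ = 2); [|lia].
  rewrite /intB -map_rcons rc (_ : C 0 = g2 2); last first.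
    by rewrite /g2 /w' (_ : n.+2 - 2 = n) ?oc /C ?fn //; lia.
  apply: path_iota => i Hi.
  rewrite /g2 (_ : n.+2 - i = (n.+1 - i).+1); last by lia.
  rewrite (_ : n.+2 - i.+1 = n.+1 - i); last by lia.
  have ai := adj (n.+1 - i) ltac:(lia); have fi := fsym _ _ ai.
  by rewrite /w' /=; case: (odd _) => /=; rewrite ?ai ?fi ?orbT.
have uniqA : uniq intA.
  rewrite map_inj_in_uniq ?iota_uniq // => i j; rewrite !mem_iota => Hi Hj.
  rewrite /w; case: (odd i); case: (odd j) => // -[] E; apply: finj E; lia.
have uniqB : uniq intB.
  rewrite map_inj_in_uniq ?iota_uniq // => i j; rewrite !mem_iota => Hi Hj.
  rewrite /g2 /w'; case: (odd _); case: (odd _) => // -[] E;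
   have := finj _ _ _ _ E; lia.
have a0 := adj 0 ltac:(lia); have a1 := adj 1 ltac:(lia).
have b0 := fsym _ _ a0; have b1 := fsym _ _ a1.
have dAB : forall x, x \in intA -> x \in intB -> False.
  move=> x /memA [k Hk ->] /memB [k' Hk'].
  have kn : k < n by move: Hk nm; clear; lia.
  have kn' : k' < n by move: Hk' nm; clear; lia.
  rewrite /w /w' /C /S; case Ok: (odd k); case Ok': (odd k') => // -[] E;
   by move: (finj _ _ kn kn' E) Ok Ok' => ->  ->.
exists (fun k : 'I_3 => C k), (fun k : 'I_3 => S k),
  (fun i j : 'I_3 => if (i == 2 :> nat) && (j == 0 :> nat) then intA
     else if (i == 0 :> nat) && (j == 2 :> nat) then intB else [::]).
split.
- split=> i j [] E; apply: val_inj.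
    have kn : i < n by move: (ltn_ord i) s3; clear; lia.
    have ln : j < n by move: (ltn_ord j) s3; clear; lia.
    exact: finj E.
  have kn : i < n by move: (ltn_ord i) s3; clear; lia.
  have ln : j < n by move: (ltn_ord j) s3; clear; lia.
  exact: finj E.
- by [].
- move=> [[|[|[|i]]] Hi] [[|[|[|j]]] Hj] //=; by rewrite ?eqxx ?a0 ?a1 ?b0 ?b1 ?orbT.
- move=> i j x.
  case: ifP => _ ; [move/memA|case: ifP => _; [move/memB| by []]];
   move=> [k Hk ->]; split=> l; apply/eqP; rewrite /w /w' /C /S.
  1-4: have kn : k < n by move: Hk nm; clear; lia.
  1-4: have ln : l < n by move: (ltn_ord l) s3; clear; lia.
  1-4: case: odd => // -[] E; move: (finj _ _ kn ln E) Hk (ltn_ord l); clear; lia.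
- move=> i j i' j' neq x.
  have contra : forall a b a' b' : 'I_3, (a, b) != (a', b') ->
     a = a' :> nat -> b = b' :> nat -> False.
    move=> a b a' b' + Ha Hb; rewrite (val_inj Ha) (val_inj Hb) eqxx //.
  case: ifP => [/andP[/eqP Hi /eqP Hj]|_];
   (case: ifP => [/andP[/eqP Hi' /eqP Hj']|_];
   [|case: ifP => [/andP[/eqP Hi' /eqP Hj']|_]]) => //.
  + move=> _; exfalso; apply: (contra _ _ _ _ neq); by rewrite ?Hi ?Hi' ?Hj ?Hj'.
  + by move=> xA; apply/negP => /(dAB _ xA).
  + move=> xB; case: ifP => [_|_]; first by apply/negP => xA; exact: dAB xA xB.
    case: ifP => [/andP[/eqP Hi'' /eqP Hj'']|_] //.
    exfalso; apply: (contra _ _ _ _ neq); by rewrite ?Hi' ?Hi'' ?Hj' ?Hj''.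
Qed.
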